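(* Let $m<n$ be positive integers and let $x_{i,j}\in[-1,1]$ for $i\in[m]$, $j\in[n]$. Then for any $a\in\mathbb{R}^m$ there exists a subset $S\subseteq[n]$ with $|S|\le m$ such that \[\Big|\sum_{i=1}^m a_i\prod_{j\in S}x_{i,j}\Big|\ge\frac{1}{4^m}\left(\frac1n\right)^{m(m+1)}\Big|\sum_{i=1}^m a_i\prod_{j=1}^n x_{i,j}\Big|.\]
   Context: An empty product equals $1$. *)

(* Defs.v *)
From mathcomp Require Import all_boot all_order all_algebra.
From mathcomp Require Import all_classical all_reals.
Set Implicit Arguments. Unset Strict Implicit. Unset Printing Implicit Defensive.

(* Main.v *)
Require Import Defs.
From mathcomp Require Import all_boot all_order all_algebra.
From mathcomp Require Import all_classical all_reals.
From mathcomp Require Import fintype finset.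
From mathcomp Require Import zify.
Import Order.TTheory GRing.Theory Num.Theory.
Set Implicit Arguments. Unset Strict Implicit. Unset Printing Implicit Defensive.

Lemma exists_sub n (T : {set 'I_n}) q : q <= #|T| ->
  exists G : {set 'I_n}, G \subset T /\ #|G| = q.
Proof.
elim: q => [|q IH] hq; first by exists set0; rewrite sub0set cards0.
have [G [GT cG]] := IH (ltnW hq).
have : 0 < #|T :\: G| by rewrite cardsD (setIidPr GT) cG; lia.
case/card_gt0P => j; rewrite inE => /andP[jG jT].
exists (j |: G); split; first by rewrite subUset sub1set jT GT.
by rewrite cardsU1 jG cG.
Qed.

Lemma exists_lab n m q c : forall (T : {set 'I_n}), c <= m -> c * q <= #|T| ->
  exists lab : 'I_n -> 'I_m.+1, forall l : 'I_m.+1, l < c ->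
    q <= #|[set j in T | lab j == l]|.
Proof.
elim: c => [|c IH] T hc hT.
  by exists (fun _ => ord_max) => l.
have hqT : q <= #|T| by rewrite mulSn in hT; lia.
have [G [GT cG]] := exists_sub hqT.
have hT' : c * q <= #|T :\: G| by rewrite cardsD (setIidPr GT) cG; rewrite mulSn in hT; lia.
have [lab' Hl] := IH _ (ltnW hc) hT'.
have cm : c < m.+1 by lia.
exists (fun j => if j \in G then Ordinal cm else lab' j) => l hl.
case: (ltngtP l c) => hlc.
- apply: leq_trans (Hl l hlc) _; apply: subset_leq_card; apply/subsetP => j.
  rewrite !inE => /andP[/andP[jG jT] /eqP <-].
  by rewrite jT (negbTE jG) eqxx.
- lia.
- rewrite -cG; apply: subset_leq_card; apply/subsetP => j jG.
  rewrite inE jG (subsetP GT _ jG) /=; apply/eqP/val_inj => /=; by rewrite hlc.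
Qed.

Local Open Scope ring_scope.

Definition Phi (R : nzRingType) m n (a : 'I_m -> R) (x : 'I_m -> 'I_n -> R) (T : {set 'I_n}) :=
  \sum_(i < m) a i * \prod_(j in T) x i j.

Definition yv (R : nzRingType) m n (x : 'I_m -> 'I_n -> R) (T : {set 'I_n}) (lab : 'I_n -> 'I_m.+1)
  (l : 'I_m.+1) : R :=
  match unlift ord_max l with
  | Some k => \prod_(j in [set j in T | lab j == l]) x k j
  | None => 0 end.

Lemma key (R : comNzRingType) m n (a : 'I_m -> R) (x : 'I_m -> 'I_n -> R) (T : {set 'I_n}) (lab : 'I_n -> 'I_m.+1) :
  \sum_(J : {set 'I_m.+1}) (\prod_(l in J) - yv x T lab l) * Phi a x [set j in T | lab j \notin J] = 0.
Proof.
rewrite /Phi.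
under eq_bigr => J _ do rewrite mulr_sumr.
rewrite exchange_big /=; apply: big1 => i _.
transitivity (a i * \prod_(l : 'I_m.+1) (- yv x T lab l + \prod_(j in [set j in T | lab j == l]) x i j)); last first.
  by rewrite (bigD1 (lift ord_max i)) //= /yv liftK addNr mul0r mulr0.
rewrite bigA_distr mulr_sumr; apply: eq_bigr => J _.
rewrite mulrCA; congr (_ * _).
symmetry; rewrite (bigID (mem J)) /=; congr (_ * _).
  by apply: eq_bigr => l ->.
rewrite (partition_big lab (fun l => l \notin J)) /=; last by move=> j; rewrite inE => /andP[].
apply: eq_big => // l lJ; rewrite (negbTE lJ).
apply: eq_bigl => j; rewrite !inE.
by case: (lab j =P l) => [->|]; rewrite ?lJ ?andbT ?andbF.
Qed.
Local Close Scope ring_scope.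
Lemma bern k n : k ^ n.+1 + n.+1 * k ^ n <= (k + 1) ^ n.+1.
Proof.
elim: n => [|n IH]; first by rewrite !expn1 expn0 muln1.
rewrite (expnS (k+1)) (expnS k (n.+1)).
have := leq_mul (leqnn (k+1)) IH.
rewrite (expnS k n) ; nia.
Qed.

Lemma bern2 m : 0 < m -> 2 * (m - 1) ^ m <= m ^ m.
Proof.
case: m => // k _; rewrite subn1 /= -addn1.
have := bern k k; rewrite expnS; nia.
Qed.

Lemma arith m t t' : 0 < m -> m < t -> t' <= t - t %/ m ->
  2 ^ m.+1 * (t' - m).+1 ^ (m * m.+1) <= (t - m).+1 ^ (m * m.+1).
Proof.
move=> m0 mt ht.
have p1 : m.+1 <= m * m.+1 by rewrite leq_pmull.
case: (leqP t' m) => ht'.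
  have -> : t' - m = 0 by lia.
  rewrite exp1n muln1.
  apply: (leq_trans (leq_pexp2l _ p1)) => //.
  rewrite leq_exp2r; [lia | by rewrite muln_gt0 m0].
have hq := divn_eq t m; have hr := ltn_pmod t m0.
set q := t %/ m in ht hq; set r := t %% m in hq hr.
have h1 : m * (t' - m).+1 <= (m - 1) * (t - m).+1 by nia.
have m1 : 0 < m - 1 by nia.
set u := (t - m).+1 in h1 *; set u' := (t' - m).+1 in h1 *.
set p := m * m.+1.
have h2 : (m * u') ^ p <= ((m - 1) * u) ^ p by rewrite leq_exp2r // muln_gt0 m0.
rewrite !expnMn in h2.
have h3 : 2 ^ m.+1 * (m - 1) ^ p <= m ^ p.
  rewrite /p mulnC !expnM -expnMn leq_exp2r //.
  by rewrite mulnC bern2.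
have e0 : 0 < (m - 1) ^ p by rewrite expn_gt0 m1.
rewrite -(leq_pmul2l e0).
apply: leq_trans _ h2; rewrite mulnA [_ * 2 ^ _]mulnC leq_mul2r h3 orbT //.
Qed.

Local Open Scope ring_scope.

Lemma main (R : realFieldType) m n (hm : (0 < m)%N) (x : 'I_m -> 'I_n -> R)
  (hx : forall i j, -1 <= x i j <= 1) (a : 'I_m -> R) :
  forall s (T : {set 'I_n}), (#|T| <= s)%N -> exists S : {set 'I_n}, (#|S| <= m)%N /\
   `|Phi a x T| <= (((#|T| - m).+1 ^ (m * m.+1))%N)%:R * `|Phi a x S|.
Proof.
elim=> [|s IH] T hT.
  exists T; split; first by lia.
  by rewrite (_ : (#|T| - m = 0)%N); [rewrite exp1n mul1r | lia].
case: (leqP #|T| m) => htm.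
  exists T; split => //.
  by rewrite (_ : (#|T| - m = 0)%N); [rewrite exp1n mul1r | lia].
have hq : (m * (#|T| %/ m) <= #|T|)%N by rewrite mulnC leq_trunc_div.
have [lab Hl] := @exists_lab n m (#|T| %/ m) m T (leqnn m) hq.
have hy : forall l, `|yv x T lab l| <= 1.
  move=> l; rewrite /yv; case: unlift => [k|]; last by rewrite normr0 ler01.
  rewrite normr_prod; apply: prodr_ile1 => j _; rewrite normr_ge0 /=.
  by have := hx k j; rewrite ler_norml.
have hkey := key a x T lab.
rewrite (bigD1 set0) //= big_set0 mul1r in hkey.
have T0 : [set j in T | lab j \notin set0] = T by apply/setP => j; rewrite !inE andbT.
rewrite T0 in hkey.
pose g := fun J : {set 'I_m.+1} => `|\prod_(l in J) - yv x T lab l| * `|Phi a x [set j in T | lab j \notin J]|.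
have hsum : `|Phi a x T| <= \sum_(J | J != set0) g J.
  have -> : Phi a x T = - \sum_(J | J != set0) (\prod_(l in J) - yv x T lab l) * Phi a x [set j in T | lab j \notin J].
    by apply/eqP; rewrite -addr_eq0 hkey.
  rewrite normrN; apply: le_trans (ler_norm_sum _ _ _) _; apply: ler_sum => J _; by rewrite normrM.
have [J [J0 hJ]] : exists J, J != set0 /\ `|Phi a x T| <= (2 ^ m.+1)%:R * g J.
  case: (boolP [exists J, (J != set0) && (`|Phi a x T| <= (2 ^ m.+1)%:R * g J)]).
    by case/existsP => J /andP[]; exists J.
  rewrite negb_exists => /forallP H; exfalso.
  have H' : forall J, J != set0 -> (2^m.+1)%:R * g J < `|Phi a x T|.
    by move=> J J0; have := H J; rewrite J0 /= -ltNge.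
  have ne : has (fun J : {set 'I_m.+1} => J != set0) (index_enum _).
    apply/hasP; exists setT; first by rewrite mem_index_enum.
    by apply/set0Pn; exists ord0; rewrite inE.
  have := ltr_sum ne H'.
  rewrite -mulr_sumr.
  rewrite [X in _ < X](eq_bigl (mem [pred J : {set 'I_m.+1} | J != set0])) //.
  rewrite sumr_const.
  have cN : (#|[pred J : {set 'I_m.+1} | J != set0]| <= 2 ^ m.+1)%N.
    apply: leq_trans (max_card _) _.
    have <- : #|powerset [set: 'I_m.+1]| = #|{set 'I_m.+1}|.
      rewrite -cardsT; congr #|pred_of_set _|; apply/setP => J.
      by rewrite powersetE subsetT inE.
    by rewrite card_powerset cardsT card_ord.
  have h2 := ler_wpMn2l (normr_ge0 (Phi a x T)) cN.
  have h3 := ler_wpM2l (ler0n R (2 ^ m.+1)) hsum.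
  move=> h1; have := lt_le_trans (le_lt_trans h3 h1) h2.
  by rewrite mulr_natl ltxx.
case: (eqVneq (\prod_(l in J) - yv x T lab l) 0) => cJ.
  exists set0; split; first by rewrite cards0.
  have : `|Phi a x T| <= 0 by move: hJ; rewrite /g cJ normr0 !mul0r mulr0.
  move=> h; apply: le_trans h _; by rewrite mulr_ge0.
have hmax : ord_max \notin J.
  apply: contraNN cJ => hJmax; apply/eqP.
  by rewrite (bigD1 ord_max) //= /yv unlift_none oppr0 mul0r.
case/set0Pn: J0 => l lJ.
have lm : (l < m)%N.
  rewrite ltn_neqAle -ltnS ltn_ord andbT.
  apply/eqP => hlm; move: hmax.
  have -> : (ord_max : 'I_m.+1) = l by apply: val_inj; rewrite /= hlm.
  by rewrite lJ.
have sub : [set j in T | lab j \notin J] \subset T :\: [set j in T | lab j == l].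
  apply/subsetP => j; rewrite !inE => /andP[jT ljJ]; rewrite jT andbT /=.
  by apply: contra ljJ => /eqP ->.
have cTJ : (#|[set j in T | lab j \notin J]| <= #|T| - #|T| %/ m)%N.
  apply: leq_trans (subset_leq_card sub) _.
  have GT : [set j in T | lab j == l] \subset T by apply/subsetP => j; rewrite inE => /andP[].
  rewrite cardsD (setIidPr GT); have := Hl l lm; lia.
have q0 : (0 < #|T| %/ m)%N by rewrite divn_gt0 // ltnW.
have [S [hS hS']] := IH [set j in T | lab j \notin J] (ltac:(lia)).
exists S; split => //.
apply: le_trans hJ _.
have hc : `|\prod_(l in J) - yv x T lab l| <= 1.
  rewrite normr_prod; apply: prodr_ile1 => l' _; by rewrite normr_ge0 normrN hy.
have har := arith hm htm cTJ.
apply: le_trans (_ : (2 ^ m.+1)%:R * (((#|[set j in T | lab j \notin J]| - m).+1 ^ (m * m.+1))%N%:R * `|Phi a x S|) <= _).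
  rewrite ler_wpM2l //.
  apply: le_trans hS'; rewrite /g -[X in _ <= X]mul1r ler_wpM2r //.
by rewrite mulrA -natrM ler_wpM2r // ler_nat.
Qed.

Theorem lemma2 (R : realType) (m n : nat) (hm : (0 < m)%N) (hmn : (m < n)%N)
  (x : 'I_m -> 'I_n -> R)
  (hx : forall i j, -1 <= x i j <= 1)
  (a : 'I_m -> R) :
  exists S : {set 'I_n}, (#|S| <= m)%N /\
    `| \sum_(i < m) a i * \prod_(j in S) x i j |
      >= (4 ^+ m)^-1 * ((n%:R)^-1) ^+ (m * m.+1)
         * `| \sum_(i < m) a i * \prod_(j < n) x i j |.
Proof.
have [S [hS hS']] := main hm hx a (leqnn #|[set: 'I_n]|).
exists S; split => //.
have -> : \sum_(i < m) a i * \prod_(j < n) x i j = Phi a x [set: 'I_n].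
  by apply: eq_bigr => i _; congr (_ * _); apply: eq_bigl => j; rewrite in_setT.
rewrite -/(Phi a x S).
move: hS'; rewrite cardsT card_ord => hS'.
have n0 : (0 : R) < n%:R by rewrite ltr0n; lia.
have hF : (((n - m).+1 ^ (m * m.+1))%N%:R : R) <= 4 ^+ m * n%:R ^+ (m * m.+1).
  rewrite natrX -[X in X <= _]mul1r ler_pM // ?exprn_ge0 //.
    by rewrite exprn_ege1 // (ler_nat _ 1 4).
  by rewrite lerXn2r ?nnegrE // ler_nat; lia.
rewrite exprVn -invfM mulrC ler_pdivrMr; last by rewrite mulr_gt0 // exprn_gt0 // ltr0n.
apply: le_trans hS' _; rewrite [X in _ <= X]mulrC ler_wpM2r //.
Qed.
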